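(* Let $U$ be an open subset of $\mathbb{R}^2$ and $I,J$ two real intervals. Let $u:U\times J\to I$ be a $C^1$ function such that $u(\cdot,\cdot\,;s)$ is harmonic for every $s\in J$, and such that there exists a $C^1$ function $t:U\times I\to J$ with $u(x,y;t(x,y;z))=z$ for all $(x,y,z)\in U\times I$. Define on $U\times I$ the vector field $$\phi(x,y,z):=\big(2\nabla u(x,y;t(x,y;z)),\ |\nabla u(x,y;t(x,y;z))|^2\big),$$ where $\nabla u(x,y;t(x,y;z))$ denotes the gradient of $u$ with respect to $(x,y)$ evaluated at $(x,y;t(x,y;z))$. Then $\phi$ is divergence free in $U\times I$. *)

(* Defs.v *)
From Stdlib Require Import Reals.
From Coquelicot Require Import Coquelicot.
Open Scope R_scope.

Definition open_ivl (a b : Rbar) (z : R) : Prop :=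
  Rbar_lt a z /\ Rbar_lt z b.

Definition open2 (U : R -> R -> Prop) : Prop :=
  open (fun p : R * R => U (fst p) (snd p)).

Definition pdx (f : R -> R -> R -> R) (x y z : R) : R := Derive (fun x' => f x' y z) x.
Definition pdy (f : R -> R -> R -> R) (x y z : R) : R := Derive (fun y' => f x y' z) y.
Definition pdz (f : R -> R -> R -> R) (x y z : R) : R := Derive (fun z' => f x y z') z.

Definition uncurry3 (g : R -> R -> R -> R) : R * R * R -> R :=
  fun p => g (fst (fst p)) (snd (fst p)) (snd p).

Definition C1_on3 (f : R -> R -> R -> R) (D : R -> R -> R -> Prop) : Prop :=
  forall x y z, D x y z ->
    ex_derive (fun x' => f x' y z) x /\
    ex_derive (fun y' => f x y' z) y /\
    ex_derive (fun z' => f x y z') z /\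
    continuous (uncurry3 f) (x, y, z) /\
    continuous (uncurry3 (pdx f)) (x, y, z) /\
    continuous (uncurry3 (pdy f)) (x, y, z) /\
    continuous (uncurry3 (pdz f)) (x, y, z).

Definition dx (g : R -> R -> R) (x y : R) : R := Derive (fun x' => g x' y) x.
Definition dy (g : R -> R -> R) (x y : R) : R := Derive (fun y' => g x y') y.

Definition uncurry2 (g : R -> R -> R) : R * R -> R := fun p => g (fst p) (snd p).

Definition C2_on2 (g : R -> R -> R) (U : R -> R -> Prop) : Prop :=
  forall x y, U x y ->
    ex_derive (fun x' => g x' y) x /\ ex_derive (fun y' => g x y') y /\
    ex_derive (fun x' => dx g x' y) x /\ ex_derive (fun y' => dx g x y') y /\
    ex_derive (fun x' => dy g x' y) x /\ ex_derive (fun y' => dy g x y') y /\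
    continuous (uncurry2 g) (x, y) /\
    continuous (uncurry2 (dx g)) (x, y) /\
    continuous (uncurry2 (dy g)) (x, y) /\
    continuous (uncurry2 (dx (dx g))) (x, y) /\
    continuous (uncurry2 (dy (dx g))) (x, y) /\
    continuous (uncurry2 (dx (dy g))) (x, y) /\
    continuous (uncurry2 (dy (dy g))) (x, y).

Definition harmonic_on (g : R -> R -> R) (U : R -> R -> Prop) : Prop :=
  C2_on2 g U /\ forall x y, U x y -> dx (dx g) x y + dy (dy g) x y = 0.

Definition divergence_free_on (P Q S : R -> R -> R -> R) (D : R -> R -> R -> Prop) : Prop :=
  forall x y z, D x y z ->
    ex_derive (fun x' => P x' y z) x /\
    ex_derive (fun y' => Q x y' z) y /\
    ex_derive (fun z' => S x y z') z /\
    pdx P x y z + pdy Q x y z + pdz S x y z = 0.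

(* Main.v *)
Require Import Defs.
From Stdlib Require Import Reals Lra.
From Coquelicot Require Import Coquelicot.
Open Scope R_scope.

Lemma c2d_of (f : R -> R -> R) x y :
  continuous (fun z : R * R => f (fst z) (snd z)) (x, y) -> continuity_2d_pt f x y.
Proof. intros H; apply continuity_2d_pt_filterlim; exact H. Qed.

Lemma of_c2d (f : R -> R -> R) x y :
  continuity_2d_pt f x y -> continuous (fun z : R * R => f (fst z) (snd z)) (x, y).
Proof. intros H; apply continuity_2d_pt_filterlim; exact H. Qed.

Lemma cont_pair {T : UniformSpace} (X Y : T -> R) p :
  continuous X p -> continuous Y p -> continuous (fun q => (X q, Y q)) p.
Proof.
  intros HX HY.
  apply (continuous_comp_2 X Y (fun a b => (a, b))); auto.
  apply continuous_ext with (f := fun z : R * R => z).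
  - intros [a b]; reflexivity.
  - apply continuous_id.
Qed.

Lemma cont_comp2 {T : UniformSpace} (h : R -> R -> R) (X Y : T -> R) p :
  continuous (uncurry2 h) (X p, Y p) -> continuous X p -> continuous Y p ->
  continuous (fun q => h (X q) (Y q)) p.
Proof. intros H HX HY. apply (continuous_comp_2 X Y h); auto. Qed.

Lemma cont_comp3 {T : UniformSpace} (f : R -> R -> R -> R) (X Y Z : T -> R) p :
  continuous (uncurry3 f) (X p, Y p, Z p) -> continuous X p -> continuous Y p -> continuous Z p ->
  continuous (fun q => f (X q) (Y q) (Z q)) p.
Proof.
  intros H HX HY HZ.
  apply (continuous_comp (fun q => (X q, Y q, Z q)) (uncurry3 f)); auto.
  apply (continuous_comp_2 (fun q => (X q, Y q)) Z (fun a b => (a, b))); auto.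
  - apply cont_pair; auto.
  - apply continuous_ext with (f := fun z : (R * R) * R => z).
    + intros [a b]; reflexivity.
    + apply continuous_id.
Qed.

Lemma cont_slice2 (F : R * R -> R) a b : continuous F (a, b) -> continuous (fun t => F (a, t)) b.
Proof.
  intros H. apply (continuous_comp (fun t => (a, t)) F); auto.
  apply cont_pair; [apply continuous_const | apply continuous_id].
Qed.

Lemma cont_slice1 (F : R * R -> R) a b : continuous F (a, b) -> continuous (fun t => F (t, b)) a.
Proof.
  intros H. apply (continuous_comp (fun t => (t, b)) F); auto.
  apply cont_pair; [apply continuous_id | apply continuous_const].
Qed.

Lemma cont_fst (p : R * R) : continuous (fun q : R * R => fst q) p.
Proof. destruct p; apply continuous_fst. Qed.
Lemma cont_snd (p : R * R) : continuous (fun q : R * R => snd q) p.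
Proof. destruct p; apply continuous_snd. Qed.

Lemma cont_plusR {T : UniformSpace} (f g : T -> R) p :
  continuous f p -> continuous g p -> continuous (fun q => f q + g q) p.
Proof. intros; apply (continuous_plus f g); auto. Qed.
Lemma cont_multR {T : UniformSpace} (f g : T -> R) p :
  continuous f p -> continuous g p -> continuous (fun q => f q * g q) p.
Proof. intros; apply (continuous_mult f g); auto. Qed.
Lemma cont_oppR {T : UniformSpace} (f : T -> R) p :
  continuous f p -> continuous (fun q => - f q) p.
Proof. intros; apply (continuous_opp f); auto. Qed.
Lemma cont_cosR {T : UniformSpace} (f : T -> R) p :
  continuous f p -> continuous (fun q => cos (f q)) p.
Proof. intros; apply (continuous_comp f cos); auto. apply continuous_cos. Qed.
Lemma cont_sinR {T : UniformSpace} (f : T -> R) p :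
  continuous f p -> continuous (fun q => sin (f q)) p.
Proof. intros; apply (continuous_comp f sin); auto. apply continuous_sin. Qed.

Lemma CH (h : R -> R -> R) (X Y : R -> R) t hx hy dX dY l :
  differentiable_pt_lim h (X t) (Y t) hx hy -> is_derive X t dX -> is_derive Y t dY ->
  l = hx * dX + hy * dY ->
  is_derive (fun s => h (X s) (Y s)) t l.
Proof.
  intros Hd HX HY ->. apply is_derive_Reals.
  apply derivable_pt_lim_comp_2d; auto; apply is_derive_Reals; auto.
Qed.

Lemma ball_R (x e y : R) : ball x e y <-> Rabs (y - x) < e.
Proof. reflexivity. Qed.

Lemma locally_Rabs_lt x Rb : Rabs x < Rb -> locally x (fun y => Rabs y < Rb).
Proof.
  intros H. assert (He : 0 < Rb - Rabs x) by lra.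
  exists (mkposreal _ He). intros y Hy. apply (proj1 (ball_R _ _ _)) in Hy; simpl in Hy.
  revert H Hy; unfold Rabs; repeat destruct Rcase_abs; lra.
Qed.

Lemma locally_ivl x lo hi : lo < x < hi -> locally x (fun y => lo < y < hi).
Proof.
  intros H. assert (He : 0 < Rmin (x - lo) (hi - x)) by (apply Rmin_pos; lra).
  exists (mkposreal _ He). intros y Hy. apply (proj1 (ball_R _ _ _)) in Hy; simpl in Hy.
  assert (H1 := Rmin_l (x - lo) (hi - x)). assert (H2 := Rmin_r (x - lo) (hi - x)).
  revert Hy; unfold Rabs; repeat destruct Rcase_abs; lra.
Qed.

Lemma PD (h dh : R -> R -> R) (a b x : R) :
  locally x (fun r => forall th, is_derive (fun z => h z th) r (dh r th)) ->
  (forall th, continuous (fun q : R * R => dh (fst q) (snd q)) (x, th)) ->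
  locally x (fun r => forall th, continuous (fun t => h r t) th) ->
  is_derive (fun r => RInt (fun th => h r th) a b) x (RInt (fun th => dh x th) a b).
Proof.
  intros Hd Hc Hi.
  assert (E : RInt (fun th => dh x th) a b = RInt (fun th => Derive (fun u => h u th) x) a b).
  { apply RInt_ext. intros th _. symmetry. apply is_derive_unique.
    destruct Hd as [e He]. apply He. apply ball_center. }
  rewrite E. apply is_derive_RInt_param.
  - destruct Hd as [e He]. exists e. intros y Hy th _. eexists. apply He; auto.
  - intros th _. apply continuity_2d_pt_ext_loc with (f := dh).
    + destruct Hd as [e He]. exists e. intros u v Hu _. symmetry. apply is_derive_unique.
      apply He. apply (proj2 (ball_R _ _ _)). exact Hu.
    + apply c2d_of. apply Hc.
  - destruct Hi as [e He]. exists e. intros y Hy. apply (@ex_RInt_continuous R_CompleteNormedModule).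
    intros z _. apply He; auto.
Qed.

Lemma is_RInt_plusR (f g : R -> R) a b If Ig :
  is_RInt f a b If -> is_RInt g a b Ig -> is_RInt (fun x => f x + g x) a b (If + Ig).
Proof. intros; apply (is_RInt_plus f g); auto. Qed.
Lemma is_RInt_scalR (f : R -> R) a b k If :
  is_RInt f a b If -> is_RInt (fun x => k * f x) a b (k * If).
Proof. intros; apply (is_RInt_scal f); auto. Qed.
Lemma is_RInt_oppR (f : R -> R) a b If :
  is_RInt f a b If -> is_RInt (fun x => - f x) a b (- If).
Proof. intros; apply (is_RInt_opp f); auto. Qed.
Lemma is_RInt_extR (f g : R -> R) a b l :
  (forall x, f x = g x) -> is_RInt f a b l -> is_RInt g a b l.
Proof. intros H; apply is_RInt_ext; intros; auto. Qed.
Lemma is_RInt_valR (f : R -> R) a b (l l' : R) : l = l' -> is_RInt f a b l -> is_RInt f a b l'.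
Proof. intros ->; auto. Qed.

Lemma FTC (f df : R -> R) a b :
  (forall x, is_derive f x (df x)) -> (forall x, continuous df x) ->
  is_RInt df a b (f b - f a).
Proof. intros H1 H2. apply (is_RInt_derive f df); auto. Qed.

Lemma RInt_of_cont (f : R -> R) a b : (forall x, continuous f x) -> is_RInt f a b (RInt f a b).
Proof. intros H. apply (@RInt_correct R_CompleteNormedModule), (@ex_RInt_continuous R_CompleteNormedModule). auto. Qed.

Lemma const_deriv (f df : R -> R) lo hi x y :
  (forall z, lo < z < hi -> is_derive f z (df z)) ->
  (forall z, lo < z < hi -> df z = 0) ->
  lo < x < hi -> lo < y < hi -> f x = f y.
Proof.
  intros Hd H0 Hx Hy.
  destruct (MVT_gen f x y df) as [c [Hc E]].
  - intros z Hz. apply Hd. revert Hz; unfold Rmin, Rmax; destruct Rle_dec; lra.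
  - intros z Hz. apply continuity_pt_filterlim. apply (@ex_derive_continuous R_AbsRing R_NormedModule f).
    eexists. apply Hd. revert Hz; unfold Rmin, Rmax; destruct Rle_dec; lra.
  - simpl in E. rewrite H0 in E. lra.
    revert Hc; unfold Rmin, Rmax; destruct Rle_dec; lra.
Qed.

Lemma slope_unique (F : R -> R) l k r :
  is_derive F 0 l -> F 0 = 0 -> 0 < r -> (forall x, 0 < x <= r -> F x = k * x) -> k = l.
Proof.
  intros Hd H0 Hr Hk. apply is_derive_Reals in Hd.
  destruct (Req_dec k l) as [|Hne]; auto. exfalso.
  assert (He : 0 < Rabs (k - l)) by (apply Rabs_pos_lt; lra).
  destruct (Hd _ He) as [d Hdd].
  assert (Hdp := cond_pos d).
  set (h := Rmin (d/2) r).
  assert (Hh : 0 < h) by (apply Rmin_pos; lra).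
  assert (Hh1 : h <= d/2) by apply Rmin_l. assert (Hh2 : h <= r) by apply Rmin_r.
  assert (Hd1 : Rabs h < d) by (rewrite Rabs_pos_eq; lra).
  specialize (Hdd h (Rgt_not_eq _ _ Hh) Hd1).
  rewrite Rplus_0_l, H0, (Hk h) in Hdd by lra.
  replace ((k * h - 0) / h - l) with (k - l) in Hdd by (field; lra). lra.
Qed.
Lemma between_abs a b c : Rmin a b <= c <= Rmax a b -> Rabs (c - a) <= Rabs (b - a).
Proof.
  unfold Rmin, Rmax; destruct (Rle_dec a b); intros; unfold Rabs;
  repeat destruct Rcase_abs; lra.
Qed.

Lemma diff_partials (f : R -> R -> R) x y :
 locally_2d (fun u v => ex_derive (fun z => f z v) u /\ ex_derive (fun z => f u z) v) x y ->
 continuity_2d_pt (fun u v => Derive (fun z => f z v) u) x y ->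
 continuity_2d_pt (fun u v => Derive (fun z => f u z) v) x y ->
 differentiable_pt_lim f x y (Derive (fun z => f z y) x) (Derive (fun z => f x z) y).
Proof.
  intros [d0 Hd] Cx Cy eps.
  assert (He2: 0 < eps/2) by (destruct eps; simpl; lra).
  destruct (Cx (mkposreal _ He2)) as [d1 H1]. destruct (Cy (mkposreal _ He2)) as [d2 H2].
  assert (Hd' : 0 < Rmin d0 (Rmin d1 d2)).
  { destruct d0, d1, d2; simpl. repeat apply Rmin_pos; auto. }
  exists (mkposreal _ Hd'). simpl. intros u v Hu Hv.
  assert (Hm0 := Rmin_l d0 (Rmin d1 d2)).
  assert (Hm1 := Rmin_l d1 d2). assert (Hm2 := Rmin_r d1 d2).
  assert (Hm3 := Rmin_r d0 (Rmin d1 d2)).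
  assert (Hx1 : forall a, Rmin x u <= a <= Rmax x u -> ex_derive (fun z => f z v) a).
  { intros a Ha. assert (Rabs (a - x) <= Rabs (u - x)) by (apply between_abs; lra).
    refine (proj1 (Hd a v _ _)); lra. }
  assert (Hy1 : forall b, Rmin y v <= b <= Rmax y v -> ex_derive (fun z => f x z) b).
  { intros b Hb. assert (Rabs (b - y) <= Rabs (v - y)) by (apply between_abs; lra).
    refine (proj2 (Hd x b _ _)); [rewrite Rminus_eq_0, Rabs_R0; destruct d0; simpl in *; lra | lra]. }
  destruct (MVT_gen (fun a => f a v) x u (fun a => Derive (fun z => f z v) a)) as [xi [Hxi Exi]].
  { intros a Ha. apply Derive_correct. apply Hx1. simpl in Ha. lra. }
  { intros a Ha. apply continuity_pt_filterlim. apply (ex_derive_continuous (fun a => f a v)).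
    apply Hx1. exact Ha. }
  destruct (MVT_gen (fun b => f x b) y v (fun b => Derive (fun z => f x z) b)) as [eta [Heta Eeta]].
  { intros a Ha. apply Derive_correct. apply Hy1. simpl in Ha. lra. }
  { intros a Ha. apply continuity_pt_filterlim. apply (ex_derive_continuous (fun b => f x b)).
    apply Hy1. exact Ha. }
  simpl in Exi, Eeta.
  assert (E : f u v - f x y - (Derive (fun z => f z y) x * (u - x) + Derive (fun z => f x z) y * (v - y))
    = (Derive (fun z => f z v) xi - Derive (fun z => f z y) x) * (u - x)
      + (Derive (fun z => f x z) eta - Derive (fun z => f x z) y) * (v - y)) by lra.
  rewrite E.
  assert (B1 : Rabs (Derive (fun z => f z v) xi - Derive (fun z => f z y) x) < eps/2).
  { apply (H1 xi v).
    - assert (Rabs (xi - x) <= Rabs (u - x)) by (apply between_abs; lra). lra.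
    - lra. }
  assert (B2 : Rabs (Derive (fun z => f x z) eta - Derive (fun z => f x z) y) < eps/2).
  { apply (H2 x eta).
    - rewrite Rminus_eq_0, Rabs_R0; lra.
    - assert (Rabs (eta - y) <= Rabs (v - y)) by (apply between_abs; lra). lra. }
  eapply Rle_trans; [apply Rabs_triang|]. rewrite !Rabs_mult.
  assert (Ma := Rmax_l (Rabs (u - x)) (Rabs (v - y))).
  assert (Mb := Rmax_r (Rabs (u - x)) (Rabs (v - y))).
  assert (Pa := Rabs_pos (u - x)). assert (Pb := Rabs_pos (v - y)).
  assert (Rabs (Derive (fun z => f z v) xi - Derive (fun z => f z y) x) * Rabs (u - x) <= eps/2 * Rmax (Rabs (u - x)) (Rabs (v - y))).
  { apply Rmult_le_compat; try apply Rabs_pos; lra. }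
  assert (Rabs (Derive (fun z => f x z) eta - Derive (fun z => f x z) y) * Rabs (v - y) <= eps/2 * Rmax (Rabs (u - x)) (Rabs (v - y))).
  { apply Rmult_le_compat; try apply Rabs_pos; lra. }
  lra.
Qed.

Lemma cont_minusR {T : UniformSpace} (f g : T -> R) p :
  continuous f p -> continuous g p -> continuous (fun q => f q - g q) p.
Proof. intros; apply cont_plusR; auto; apply cont_oppR; auto. Qed.
Lemma cont_divcR {T : UniformSpace} (f : T -> R) c p :
  continuous f p -> continuous (fun q => f q / c) p.
Proof. intros; apply cont_multR; auto; apply continuous_const. Qed.

Ltac contR := repeat match goal with
 | |- continuous (fun _ => _ + _) _ => apply cont_plusR
 | |- continuous (fun _ => _ - _) _ => apply cont_minusR
 | |- continuous (fun _ => _ / _) _ => apply cont_divcR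
 | |- continuous (fun _ => _ * _) _ => apply cont_multR
 | |- continuous (fun _ => - _) _ => apply cont_oppR
 | |- continuous (fun _ => cos _) _ => apply cont_cosR
 | |- continuous cos _ => apply continuous_cos
 | |- continuous (fun _ => sin _) _ => apply cont_sinR
 | |- continuous sin _ => apply continuous_sin
 | |- continuous (fun q => fst q) _ => apply cont_fst
 | |- continuous fst _ => apply cont_fst
 | |- continuous snd _ => apply cont_snd
 | |- continuous (fun q => snd q) _ => apply cont_snd
 | |- continuous (fun q => q) _ => apply continuous_id
 | |- continuous (fun _ => ?c) _ => apply continuous_const
 end.

Lemma is_derive_mulR (f h : R -> R) t df dh :
  is_derive f t df -> is_derive h t dh -> is_derive (fun s => f s * h s) t (df * h t + f t * dh).
Proof. intros H1 H2. apply (is_derive_mult f h); auto. intros; apply Rmult_comm. Qed.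
Lemma is_derive_plusR (f h : R -> R) t df dh :
  is_derive f t df -> is_derive h t dh -> is_derive (fun s => f s + h s) t (df + dh).
Proof. intros H1 H2. apply (is_derive_plus f h); auto. Qed.
Lemma is_derive_val (f : R -> R) t (l l' : R) : l = l' -> is_derive f t l -> is_derive f t l'.
Proof. intros ->; auto. Qed.

Lemma is_RInt_cc : is_RInt (fun th => cos th * cos th) 0 (2 * PI) PI.
Proof.
  apply is_RInt_valR with (l := (2*PI + sin (2*PI) * cos (2*PI))/2 - (0 + sin 0 * cos 0)/2).
  { rewrite sin_2PI, cos_2PI, sin_0, cos_0; field. }
  apply (FTC (fun th => (th + sin th * cos th)/2)).
  - intros x. auto_derive; auto. assert (H := sin2_cos2 x). unfold Rsqr in H. lra.
  - intros x. contR.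
Qed.
Lemma is_RInt_ss : is_RInt (fun th => sin th * sin th) 0 (2 * PI) PI.
Proof.
  apply is_RInt_valR with (l := (2*PI - sin (2*PI) * cos (2*PI))/2 - (0 - sin 0 * cos 0)/2).
  { rewrite sin_2PI, cos_2PI, sin_0, cos_0; field. }
  apply (FTC (fun th => (th - sin th * cos th)/2)).
  - intros x. auto_derive; auto. assert (H := sin2_cos2 x). unfold Rsqr in H. lra.
  - intros x. contR.
Qed.
Lemma is_RInt_sc : is_RInt (fun th => sin th * cos th) 0 (2 * PI) 0.
Proof.
  apply is_RInt_valR with (l := (sin (2*PI) * sin (2*PI))/2 - (sin 0 * sin 0)/2).
  { rewrite sin_2PI, sin_0; field. }
  apply (FTC (fun th => (sin th * sin th)/2)).
  - intros x. auto_derive; auto. lra.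
  - intros x. contR.
Qed.
Lemma is_RInt_cs : is_RInt (fun th => cos th * sin th) 0 (2 * PI) 0.
Proof.
  apply (is_RInt_extR (fun th => sin th * cos th)). intros; ring. apply is_RInt_sc.
Qed.

Section Harm.
Variables (U : R -> R -> Prop) (g : R -> R -> R) (a b Rb : R).
Hypothesis HU : forall x y, Rabs (x - a) < Rb -> Rabs (y - b) < Rb -> U x y.
Hypothesis Hh : harmonic_on g U.

Definition P1 r th := a + r * cos th.
Definition P2 r th := b + r * sin th.

Lemma inbox_loc x y : Rabs (x - a) < Rb -> Rabs (y - b) < Rb ->
  locally_2d (fun u v => Rabs (u - a) < Rb /\ Rabs (v - b) < Rb) x y.
Proof.
  intros H1 H2. assert (He : 0 < Rmin (Rb - Rabs (x - a)) (Rb - Rabs (y - b))) by (apply Rmin_pos; lra).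
  exists (mkposreal _ He). simpl. intros u v Hu Hv.
  assert (M1 := Rmin_l (Rb - Rabs (x - a)) (Rb - Rabs (y - b))).
  assert (M2 := Rmin_r (Rb - Rabs (x - a)) (Rb - Rabs (y - b))).
  assert (T1 := Rabs_triang (u - x) (x - a)). assert (T2 := Rabs_triang (v - y) (y - b)).
  replace (u - x + (x - a)) with (u - a) in T1 by ring.
  replace (v - y + (y - b)) with (v - b) in T2 by ring.
  split; lra.
Qed.

Lemma P_in r th : Rabs r < Rb -> Rabs (P1 r th - a) < Rb /\ Rabs (P2 r th - b) < Rb.
Proof.
  intros H. unfold P1, P2. replace (a + r * cos th - a) with (r * cos th) by ring.
  replace (b + r * sin th - b) with (r * sin th) by ring. rewrite !Rabs_mult.
  assert (Hc : Rabs (cos th) <= 1) by (apply Rabs_le; apply COS_bound).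
  assert (Hs : Rabs (sin th) <= 1) by (apply Rabs_le; apply SIN_bound).
  assert (Hr := Rabs_pos r).
  split; nra.
Qed.

Lemma C2pt x y : Rabs (x - a) < Rb -> Rabs (y - b) < Rb ->
    ex_derive (fun x' => g x' y) x /\ ex_derive (fun y' => g x y') y /\
    ex_derive (fun x' => dx g x' y) x /\ ex_derive (fun y' => dx g x y') y /\
    ex_derive (fun x' => dy g x' y) x /\ ex_derive (fun y' => dy g x y') y /\
    continuous (uncurry2 g) (x, y) /\
    continuous (uncurry2 (dx g)) (x, y) /\
    continuous (uncurry2 (dy g)) (x, y) /\
    continuous (uncurry2 (dx (dx g))) (x, y) /\
    continuous (uncurry2 (dy (dx g))) (x, y) /\
    continuous (uncurry2 (dx (dy g))) (x, y) /\
    continuous (uncurry2 (dy (dy g))) (x, y).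
Proof. intros H1 H2. apply (proj1 Hh). apply HU; auto. Qed.

Lemma lap0 x y : Rabs (x - a) < Rb -> Rabs (y - b) < Rb -> dx (dx g) x y + dy (dy g) x y = 0.
Proof. intros H1 H2. apply (proj2 Hh). apply HU; auto. Qed.

Lemma diff_g x y : Rabs (x - a) < Rb -> Rabs (y - b) < Rb ->
  differentiable_pt_lim g x y (dx g x y) (dy g x y).
Proof.
  intros H1 H2. apply diff_partials.
  - destruct (inbox_loc x y H1 H2) as [d Hd]. exists d. intros u v Hu Hv.
    destruct (Hd u v Hu Hv) as [B1 B2].
    destruct (C2pt u v B1 B2) as (e1&e2&_). auto.
  - apply c2d_of. apply (C2pt x y H1 H2).
  - apply c2d_of. apply (C2pt x y H1 H2).
Qed.

Lemma diff_gx x y : Rabs (x - a) < Rb -> Rabs (y - b) < Rb ->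
  differentiable_pt_lim (dx g) x y (dx (dx g) x y) (dy (dx g) x y).
Proof.
  intros H1 H2. apply diff_partials.
  - destruct (inbox_loc x y H1 H2) as [d Hd]. exists d. intros u v Hu Hv.
    destruct (Hd u v Hu Hv) as [B1 B2].
    destruct (C2pt u v B1 B2) as (e1&e2&e3&e4&_). auto.
  - apply c2d_of. apply (C2pt x y H1 H2).
  - apply c2d_of. apply (C2pt x y H1 H2).
Qed.

Lemma diff_gy x y : Rabs (x - a) < Rb -> Rabs (y - b) < Rb ->
  differentiable_pt_lim (dy g) x y (dx (dy g) x y) (dy (dy g) x y).
Proof.
  intros H1 H2. apply diff_partials.
  - destruct (inbox_loc x y H1 H2) as [d Hd]. exists d. intros u v Hu Hv.
    destruct (Hd u v Hu Hv) as [B1 B2].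
    destruct (C2pt u v B1 B2) as (e1&e2&e3&e4&e5&e6&_). auto.
  - apply c2d_of. apply (C2pt x y H1 H2).
  - apply c2d_of. apply (C2pt x y H1 H2).
Qed.

Lemma dP1r r th : is_derive (fun r => P1 r th) r (cos th).
Proof. unfold P1. auto_derive; auto; ring. Qed.
Lemma dP2r r th : is_derive (fun r => P2 r th) r (sin th).
Proof. unfold P2. auto_derive; auto; ring. Qed.
Lemma dP1t r th : is_derive (fun th => P1 r th) th (- r * sin th).
Proof. unfold P1. auto_derive; auto; ring. Qed.
Lemma dP2t r th : is_derive (fun th => P2 r th) th (r * cos th).
Proof. unfold P2. auto_derive; auto; ring. Qed.

Definition w r th := g (P1 r th) (P2 r th).
Definition GX r th := dx g (P1 r th) (P2 r th).
Definition GY r th := dy g (P1 r th) (P2 r th).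
Definition AA r th := dx (dx g) (P1 r th) (P2 r th).
Definition BB r th := dy (dx g) (P1 r th) (P2 r th).
Definition CC r th := dx (dy g) (P1 r th) (P2 r th).
Definition DD r th := dy (dy g) (P1 r th) (P2 r th).
Definition W1 r th := cos th * GX r th + sin th * GY r th.
Definition V r th := - sin th * GX r th + cos th * GY r th.
Definition W2 r th := cos th * (cos th * AA r th + sin th * BB r th)
                    + sin th * (cos th * CC r th + sin th * DD r th).
Definition Vt r th := - cos th * GX r th + (- sin th) * (AA r th * (- r * sin th) + BB r th * (r * cos th))
                    + (- sin th) * GY r th + cos th * (CC r th * (- r * sin th) + DD r th * (r * cos th)).

Lemma key_id r th : Rabs r < Rb -> W1 r th + r * W2 r th + Vt r th = 0.
Proof.
  intros H. destruct (P_in r th H) as [B1 B2].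
  assert (L := lap0 _ _ B1 B2).
  assert (S := sin2_cos2 th). unfold Rsqr in S.
  unfold W1, W2, Vt, AA, DD in *.
  transitivity (r * (dx (dx g) (P1 r th) (P2 r th) + dy (dy g) (P1 r th) (P2 r th)) * (sin th * sin th + cos th * cos th)).
  - ring.
  - rewrite L. ring.
Qed.

Lemma d_w_r r th : Rabs r < Rb -> is_derive (fun r => w r th) r (W1 r th).
Proof.
  intros H. destruct (P_in r th H) as [B1 B2]. unfold w.
  apply (CH g (fun r => P1 r th) (fun r => P2 r th) r (dx g (P1 r th) (P2 r th)) (dy g (P1 r th) (P2 r th)) (cos th) (sin th)).
  - apply diff_g; auto.
  - apply dP1r.
  - apply dP2r.
  - unfold W1, GX, GY. ring.
Qed.

Lemma d_w_t r th : Rabs r < Rb -> is_derive (fun th => w r th) th (r * V r th).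
Proof.
  intros H. destruct (P_in r th H) as [B1 B2]. unfold w.
  apply (CH g (fun th => P1 r th) (fun th => P2 r th) th (dx g (P1 r th) (P2 r th)) (dy g (P1 r th) (P2 r th)) (- r * sin th) (r * cos th)).
  - apply diff_g; auto.
  - apply dP1t.
  - apply dP2t.
  - unfold V, GX, GY. ring.
Qed.

Lemma d_GX_r r th : Rabs r < Rb -> is_derive (fun r => GX r th) r (AA r th * cos th + BB r th * sin th).
Proof.
  intros H. destruct (P_in r th H) as [B1 B2]. unfold GX.
  apply (CH (dx g) (fun r => P1 r th) (fun r => P2 r th) r (dx (dx g) (P1 r th) (P2 r th)) (dy (dx g) (P1 r th) (P2 r th)) (cos th) (sin th)).
  - apply diff_gx; auto.
  - apply dP1r. - apply dP2r. - reflexivity.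
Qed.
Lemma d_GY_r r th : Rabs r < Rb -> is_derive (fun r => GY r th) r (CC r th * cos th + DD r th * sin th).
Proof.
  intros H. destruct (P_in r th H) as [B1 B2]. unfold GY.
  apply (CH (dy g) (fun r => P1 r th) (fun r => P2 r th) r (dx (dy g) (P1 r th) (P2 r th)) (dy (dy g) (P1 r th) (P2 r th)) (cos th) (sin th)).
  - apply diff_gy; auto.
  - apply dP1r. - apply dP2r. - reflexivity.
Qed.
Lemma d_GX_t r th : Rabs r < Rb -> is_derive (fun th => GX r th) th (AA r th * (- r * sin th) + BB r th * (r * cos th)).
Proof.
  intros H. destruct (P_in r th H) as [B1 B2]. unfold GX.
  apply (CH (dx g) (fun th => P1 r th) (fun th => P2 r th) th (dx (dx g) (P1 r th) (P2 r th)) (dy (dx g) (P1 r th) (P2 r th)) (- r * sin th) (r * cos th)).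
  - apply diff_gx; auto.
  - apply dP1t. - apply dP2t. - reflexivity.
Qed.
Lemma d_GY_t r th : Rabs r < Rb -> is_derive (fun th => GY r th) th (CC r th * (- r * sin th) + DD r th * (r * cos th)).
Proof.
  intros H. destruct (P_in r th H) as [B1 B2]. unfold GY.
  apply (CH (dy g) (fun th => P1 r th) (fun th => P2 r th) th (dx (dy g) (P1 r th) (P2 r th)) (dy (dy g) (P1 r th) (P2 r th)) (- r * sin th) (r * cos th)).
  - apply diff_gy; auto.
  - apply dP1t. - apply dP2t. - reflexivity.
Qed.

Lemma d_W1_r r th : Rabs r < Rb -> is_derive (fun r => W1 r th) r (W2 r th).
Proof.
  intros H. unfold W1.
  apply is_derive_val with (l := (0 * GX r th + cos th * (AA r th * cos th + BB r th * sin th))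
                                 + (0 * GY r th + sin th * (CC r th * cos th + DD r th * sin th))).
  { unfold W2. ring. }
  apply is_derive_plusR.
  - apply (is_derive_mulR (fun _ => cos th) (fun r => GX r th)). (auto_derive; try easy; try ring). apply d_GX_r; auto.
  - apply (is_derive_mulR (fun _ => sin th) (fun r => GY r th)). (auto_derive; try easy; try ring). apply d_GY_r; auto.
Qed.

Lemma d_V_t r th : Rabs r < Rb -> is_derive (fun th => V r th) th (Vt r th).
Proof.
  intros H. unfold V.
  apply is_derive_val with (l := (- cos th * GX r th + - sin th * (AA r th * (- r * sin th) + BB r th * (r * cos th)))
                                 + (- sin th * GY r th + cos th * (CC r th * (- r * sin th) + DD r th * (r * cos th)))).
  { unfold Vt. ring. }
  apply is_derive_plusR.
  - apply (is_derive_mulR (fun th => - sin th) (fun th => GX r th)). auto_derive; auto; ring. apply d_GX_t; auto.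
  - apply (is_derive_mulR (fun th => cos th) (fun th => GY r th)). auto_derive; auto; ring. apply d_GY_t; auto.
Qed.


Lemma cont_Pcomp (h : R -> R -> R) r th :
  continuous (uncurry2 h) (P1 r th, P2 r th) ->
  continuous (fun q : R * R => h (P1 (fst q) (snd q)) (P2 (fst q) (snd q))) (r, th).
Proof.
  intros H. apply (cont_comp2 h (fun q => P1 (fst q) (snd q)) (fun q => P2 (fst q) (snd q))).
  - exact H.
  - unfold P1; contR.
  - unfold P2; contR.
Qed.

Ltac contP r th H := let B1 := fresh in let B2 := fresh in destruct (P_in r th H) as [B1 B2]; destruct (C2pt _ _ B1 B2) as (_&_&_&_&_&_&?c7&?c8&?c9&?c10&?c11&?c12&?c13); apply cont_Pcomp; assumption.

Lemma cont_w r th : Rabs r < Rb -> continuous (fun q : R * R => w (fst q) (snd q)) (r, th).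
Proof. intros H. unfold w. contP r th H. Qed.
Lemma cont_GX r th : Rabs r < Rb -> continuous (fun q : R * R => GX (fst q) (snd q)) (r, th).
Proof. intros H. unfold GX. contP r th H. Qed.
Lemma cont_GY r th : Rabs r < Rb -> continuous (fun q : R * R => GY (fst q) (snd q)) (r, th).
Proof. intros H. unfold GY. contP r th H. Qed.
Lemma cont_AA r th : Rabs r < Rb -> continuous (fun q : R * R => AA (fst q) (snd q)) (r, th).
Proof. intros H. unfold AA. contP r th H. Qed.
Lemma cont_BB r th : Rabs r < Rb -> continuous (fun q : R * R => BB (fst q) (snd q)) (r, th).
Proof. intros H. unfold BB. contP r th H. Qed.
Lemma cont_CC r th : Rabs r < Rb -> continuous (fun q : R * R => CC (fst q) (snd q)) (r, th).
Proof. intros H. unfold CC. contP r th H. Qed.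
Lemma cont_DD r th : Rabs r < Rb -> continuous (fun q : R * R => DD (fst q) (snd q)) (r, th).
Proof. intros H. unfold DD. contP r th H. Qed.

Ltac contB1 H := match goal with
 | |- continuous (fun _ => GX _ _) _ => apply cont_GX; exact H
 | |- continuous (fun _ => GY _ _) _ => apply cont_GY; exact H
 | |- continuous (fun _ => AA _ _) _ => apply cont_AA; exact H
 | |- continuous (fun _ => BB _ _) _ => apply cont_BB; exact H
 | |- continuous (fun _ => CC _ _) _ => apply cont_CC; exact H
 | |- continuous (fun _ => DD _ _) _ => apply cont_DD; exact H
 | |- continuous (fun _ => w _ _) _ => apply cont_w; exact H
 end.
Ltac contB H := contR; contB1 H.

Lemma cont_W1 r th : Rabs r < Rb -> continuous (fun q : R * R => W1 (fst q) (snd q)) (r, th).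
Proof. intros H. unfold W1. contB H. Qed.
Lemma cont_W2 r th : Rabs r < Rb -> continuous (fun q : R * R => W2 (fst q) (snd q)) (r, th).
Proof. intros H. unfold W2. contB H. Qed.
Lemma cont_V r th : Rabs r < Rb -> continuous (fun q : R * R => V (fst q) (snd q)) (r, th).
Proof. intros H. unfold V. contB H. Qed.
Lemma cont_Vt r th : Rabs r < Rb -> continuous (fun q : R * R => Vt (fst q) (snd q)) (r, th).
Proof. intros H. unfold Vt. contB H. Qed.

Lemma slice (F : R -> R -> R) r : (forall th, continuous (fun q : R * R => F (fst q) (snd q)) (r, th)) ->
  forall th, continuous (fun t => F r t) th.
Proof. intros H th. apply (cont_slice2 (fun q : R * R => F (fst q) (snd q))). apply H. Qed.

Lemma is_RInt_uniqR (f : R -> R) lo hi (l : R) : is_RInt f lo hi l -> RInt f lo hi = l.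
Proof. apply (@is_RInt_unique R_CompleteNormedModule). Qed.

Lemma V_per r : V r (2 * PI) = V r 0.
Proof. unfold V, GX, GY, P1, P2. rewrite cos_2PI, sin_2PI, cos_0, sin_0. reflexivity. Qed.
Lemma w_per r : w r (2 * PI) = w r 0.
Proof. unfold w, P1, P2. rewrite cos_2PI, sin_2PI, cos_0, sin_0. reflexivity. Qed.

Lemma loc_all r (P : R -> Prop) : Rabs r < Rb -> (forall r, Rabs r < Rb -> P r) -> locally r P.
Proof. intros H HP. eapply filter_imp; [| apply (locally_Rabs_lt r Rb H)]. auto. Qed.

Lemma dI1 r : Rabs r < Rb ->
  is_derive (fun r => RInt (fun th => W1 r th) 0 (2*PI)) r (RInt (fun th => W2 r th) 0 (2*PI)).
Proof.
  intros H. apply (PD W1 W2).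
  - apply loc_all; auto. intros; apply d_W1_r; auto.
  - intros; apply cont_W2; auto.
  - apply loc_all; auto. intros. apply slice. intros; apply cont_W1; auto.
Qed.

Lemma is_RInt_c (F : R -> R -> R) r :
  (forall th, continuous (fun q : R * R => F (fst q) (snd q)) (r, th)) ->
  is_RInt (fun th => F r th) 0 (2*PI) (RInt (fun th => F r th) 0 (2*PI)).
Proof. intros H. apply RInt_of_cont. apply slice. auto. Qed.

Lemma MVP r : 0 < r < Rb -> RInt (fun th => W1 r th) 0 (2*PI) = 0.
Proof.
  intros Hr.
  assert (Z : forall r, Rabs r < Rb ->
     RInt (fun th => W1 r th) 0 (2*PI) + r * RInt (fun th => W2 r th) 0 (2*PI) = 0).
  { intros s Hs.
    assert (A := is_RInt_plusR _ _ _ _ _ _ (is_RInt_c W1 s (fun th => cont_W1 s th Hs))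
                   (is_RInt_scalR _ _ _ s _ (is_RInt_c W2 s (fun th => cont_W2 s th Hs)))).
    assert (B : is_RInt (fun th => - Vt s th) 0 (2*PI) (- (V s (2*PI) - V s 0))).
    { apply is_RInt_oppR. apply (FTC (fun th => V s th) (fun th => Vt s th)).
      - intros; apply d_V_t; auto.
      - apply slice. intros; apply cont_Vt; auto. }
    rewrite V_per in B.
    apply is_RInt_extR with (g := fun th => W1 s th + s * W2 s th) in B.
    2:{ intros th. assert (K := key_id s th Hs). lra. }
    assert (E := eq_trans (eq_sym (is_RInt_uniqR _ _ _ _ A)) (is_RInt_uniqR _ _ _ _ B)).
    simpl in E. lra. }
  assert (Hb : 0 < Rb) by lra.
  assert (E : (fun s => s * RInt (fun th => W1 s th) 0 (2*PI)) r = (fun s => s * RInt (fun th => W1 s th) 0 (2*PI)) 0).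
  { apply (const_deriv (fun s => s * RInt (fun th => W1 s th) 0 (2*PI)) (fun s => 1 * RInt (fun th => W1 s th) 0 (2*PI) + s * RInt (fun th => W2 s th) 0 (2*PI)) (- Rb) Rb r 0).
    - intros z Hz. apply (is_derive_mulR (fun s => s) (fun s => RInt (fun th => W1 s th) 0 (2*PI))).
      auto_derive; try easy; try ring. apply dI1.
      unfold Rabs; destruct Rcase_abs; lra.
    - intros z Hz. rewrite Rmult_1_l. apply Z. unfold Rabs; destruct Rcase_abs; lra.
    - lra. - lra. }
  simpl in E. rewrite Rmult_0_l in E.
  apply Rmult_integral in E. destruct E; [lra | auto].
Qed.

Lemma div_fix (p q r : R) : r <> 0 -> p / r = q -> p = r * q.
Proof. intros H E. rewrite <- E. field. auto. Qed.
Lemma div_fix2 (p k x : R) : x <> 0 -> p / x = k -> p = k * x.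
Proof. intros H E. rewrite <- E. field. auto. Qed.
Lemma div_fix3 (p r : R) : r <> 0 -> p = p / r * r.
Proof. intros H. field. auto. Qed.

Lemma is_derive_minusR (f h : R -> R) t df dh :
  is_derive f t df -> is_derive h t dh -> is_derive (fun s => f s - h s) t (df - dh).
Proof. intros H1 H2. apply (is_derive_minus f h); auto. Qed.

Lemma w0 th : w 0 th = g a b.
Proof. unfold w, P1, P2. rewrite !Rmult_0_l, !Rplus_0_r. reflexivity. Qed.

Lemma REP (phi psi : R -> R) r :
  (forall t, is_derive phi t (psi t)) -> (forall t, is_derive psi t (- phi t)) ->
  phi (2*PI) = phi 0 -> psi (2*PI) = psi 0 -> 0 < r < Rb ->
  RInt (fun th => w r th * phi th) 0 (2*PI) = r * RInt (fun th => W1 0 th * phi th) 0 (2*PI).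
Proof.
  intros Dphi Dpsi Pphi Ppsi Hr.
  assert (Cphi : forall t, continuous phi t).
  { intros; apply (@ex_derive_continuous R_AbsRing R_NormedModule); eexists; apply Dphi. }
  assert (Cpsi : forall t, continuous psi t).
  { intros; apply (@ex_derive_continuous R_AbsRing R_NormedModule); eexists; apply Dpsi. }
  assert (Cphi2 : forall p : R * R, continuous (fun q : R * R => phi (snd q)) p).
  { intros; apply (continuous_comp (fun q : R * R => snd q) phi); [apply cont_snd | apply Cphi]. }
  set (F0 := fun s => RInt (fun th => w s th * phi th) 0 (2*PI)).
  set (F1 := fun s => RInt (fun th => W1 s th * phi th) 0 (2*PI)).
  set (F2 := fun s => RInt (fun th => W2 s th * phi th) 0 (2*PI)).
  assert (dF0 : forall s, Rabs s < Rb -> is_derive F0 s (F1 s)).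
  { intros s Hs. apply (PD (fun s th => w s th * phi th) (fun s th => W1 s th * phi th)).
    - apply loc_all; auto. intros s' Hs' th.
      apply is_derive_val with (l := W1 s' th * phi th + w s' th * 0). ring.
      apply (is_derive_mulR (fun s => w s th) (fun _ => phi th)). apply d_w_r; auto. auto_derive; try easy.
    - intros th. cbv beta. apply cont_multR. apply cont_W1; auto. apply Cphi2.
    - apply loc_all; auto. intros s' Hs'. apply (slice (fun s th => w s th * phi th)). intros th.
      cbv beta. apply cont_multR. apply cont_w; auto. apply Cphi2. }
  assert (dF1 : forall s, Rabs s < Rb -> is_derive F1 s (F2 s)).
  { intros s Hs. apply (PD (fun s th => W1 s th * phi th) (fun s th => W2 s th * phi th)).
    - apply loc_all; auto. intros s' Hs' th.
      apply is_derive_val with (l := W2 s' th * phi th + W1 s' th * 0). ring.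
      apply (is_derive_mulR (fun s => W1 s th) (fun _ => phi th)). apply d_W1_r; auto. auto_derive; try easy.
    - intros th. cbv beta. apply cont_multR. apply cont_W2; auto. apply Cphi2.
    - apply loc_all; auto. intros s' Hs'. apply (slice (fun s th => W1 s th * phi th)). intros th.
      cbv beta. apply cont_multR. apply cont_W1; auto. apply Cphi2. }
  assert (Z : forall s, Rabs s < Rb -> s * F1 s + s * s * F2 s - F0 s = 0).
  { intros s Hs.
    assert (I0 := is_RInt_c (fun s th => w s th * phi th) s (fun th => cont_multR _ _ _ (cont_w s th Hs) (Cphi2 _))).
    assert (I1 := is_RInt_c (fun s th => W1 s th * phi th) s (fun th => cont_multR _ _ _ (cont_W1 s th Hs) (Cphi2 _))).
    assert (I2 := is_RInt_c (fun s th => W2 s th * phi th) s (fun th => cont_multR _ _ _ (cont_W2 s th Hs) (Cphi2 _))).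
    assert (A := is_RInt_plusR _ _ _ _ _ _ (is_RInt_plusR _ _ _ _ _ _ (is_RInt_scalR _ _ _ s _ I1) (is_RInt_scalR _ _ _ (s * s) _ I2))
                  (is_RInt_oppR _ _ _ _ I0)).
    set (X := fun th => (s * V s th) * phi th - w s th * psi th).
    assert (dX : forall th, is_derive X th (s * Vt s th * phi th + w s th * phi th)).
    { intros th. unfold X.
      apply is_derive_val with (l := ((0 * V s th + s * Vt s th) * phi th + (s * V s th) * psi th)
                                     - ((s * V s th) * psi th + w s th * (- phi th))). ring.
      apply is_derive_minusR.
      - apply (is_derive_mulR (fun th => s * V s th) phi); auto.
        apply (is_derive_mulR (fun _ => s) (fun th => V s th)). auto_derive; try easy. apply d_V_t; auto.
      - apply (is_derive_mulR (fun th => w s th) psi); auto. apply d_w_t; auto. }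
    assert (B := FTC X _ 0 (2*PI) dX).
    assert (HX : X (2*PI) = X 0) by (unfold X; rewrite V_per, w_per, Pphi, Ppsi; reflexivity).
    rewrite HX, Rminus_eq_0 in B.
    assert (Cw := slice w s (fun th => cont_w s th Hs)).
    assert (CVt := slice Vt s (fun th => cont_Vt s th Hs)).
    specialize (B (fun th => cont_plusR _ _ _ (cont_multR _ _ _ (cont_multR _ _ _ (continuous_const _ _) (CVt th)) (Cphi th))
                                         (cont_multR _ _ _ (Cw th) (Cphi th)))).
    apply is_RInt_oppR in B.
    apply is_RInt_extR with (g := fun th => s * (W1 s th * phi th) + (s * s) * (W2 s th * phi th) + - (w s th * phi th)) in B.
    2:{ intros th. assert (K := key_id s th Hs).
        transitivity (- (s * Vt s th * phi th + w s th * phi th) + s * phi th * (W1 s th + s * W2 s th + Vt s th)).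
        - rewrite K; ring.
        - ring. }
    assert (E := eq_trans (eq_sym (is_RInt_uniqR _ _ _ _ A)) (is_RInt_uniqR _ _ _ _ B)).
    unfold F0, F1, F2. simpl in E. lra. }
  assert (Hb : 0 < Rb) by lra.
  assert (Psi0 : forall x, Rabs x < Rb -> x * (x * F1 x - F0 x) = 0).
  { intros x Hx.
    assert (E : (fun s => s * (s * F1 s - F0 s)) x = (fun s => s * (s * F1 s - F0 s)) 0).
    { apply (const_deriv (fun s => s * (s * F1 s - F0 s))
         (fun s => 1 * (s * F1 s - F0 s) + s * ((1 * F1 s + s * F2 s) - F1 s)) (- Rb) Rb x 0).
      - intros z Hz. assert (Hz' : Rabs z < Rb) by (unfold Rabs; destruct Rcase_abs; lra).
        apply (is_derive_mulR (fun s => s) (fun s => s * F1 s - F0 s)).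
        auto_derive; try easy; try ring.
        apply is_derive_minusR; auto.
        apply (is_derive_mulR (fun s => s) F1); auto. auto_derive; try easy; try ring.
      - intros z Hz. assert (Hz' : Rabs z < Rb) by (unfold Rabs; destruct Rcase_abs; lra).
        rewrite <- (Z z Hz'). ring.
      - revert Hx; unfold Rabs; destruct Rcase_abs; lra.
      - lra. }
    simpl in E. rewrite E. ring. }
  assert (Q : forall x, 0 < x < Rb -> F0 x / x = F0 r / r).
  { intros x Hx.
    apply (const_deriv (fun s => F0 s / s) (fun s => (F1 s * s - F0 s * 1) / s ^ 2) 0 Rb x r); auto.
    - intros z Hz. assert (Hz' : Rabs z < Rb) by (unfold Rabs; destruct Rcase_abs; lra).
      apply is_derive_div; auto. auto_derive; try easy. lra.
    - intros z Hz. assert (Hz' : Rabs z < Rb) by (unfold Rabs; destruct Rcase_abs; lra).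
      assert (P := Psi0 z Hz'). apply Rmult_integral in P. destruct P as [P|P]; [lra|].
      assert (z * F1 z = F0 z) by lra. field_simplify; [|lra]. rewrite <- H. field. lra. }
  assert (IF : is_RInt phi 0 (2*PI) 0).
  { assert (B := FTC psi (fun t => - phi t) 0 (2*PI) Dpsi (fun t => cont_oppR _ _ (Cphi t))).
    rewrite Ppsi, Rminus_eq_0 in B. apply is_RInt_oppR in B. rewrite Ropp_0 in B.
    apply is_RInt_extR with (g := phi) in B; auto. intros; ring. }
  assert (F00 : F0 0 = 0).
  { unfold F0. apply is_RInt_uniqR. apply is_RInt_valR with (l := g a b * 0). ring.
    apply is_RInt_extR with (f := fun th => g a b * phi th). intros; rewrite w0; ring.
    apply is_RInt_scalR; auto. }
  assert (S := slope_unique F0 (F1 0) (F0 r / r) r (dF0 0 ltac:(rewrite Rabs_R0; lra)) F00 ltac:(lra)).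
  assert (HF : @eq R (F0 r) (r * F1 0)).
  { apply (div_fix (F0 r) (F1 0) r). lra. apply S.
    intros x Hx. destruct (Req_dec x r) as [->|Hne].
    apply (div_fix3 (F0 r) r). lra.
    apply (div_fix2 (F0 x) (F0 r / r) x). lra. apply Q. lra. }
  exact HF.
Qed.

Lemma GX0 th : GX 0 th = dx g a b.
Proof. unfold GX, P1, P2. rewrite !Rmult_0_l, !Rplus_0_r. reflexivity. Qed.
Lemma GY0 th : GY 0 th = dy g a b.
Proof. unfold GY, P1, P2. rewrite !Rmult_0_l, !Rplus_0_r. reflexivity. Qed.

Lemma rep_fix (X d e r : R) : 0 < r -> X = r * (d * PI + e * 0) -> d = / (PI * r) * X.
Proof. intros H E. rewrite E. field. split; [lra | apply Rgt_not_eq, PI_RGT_0]. Qed.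
Lemma rep_fix' (X d e r : R) : 0 < r -> X = r * (e * 0 + d * PI) -> d = / (PI * r) * X.
Proof. intros H E. rewrite E. field. split; [lra | apply Rgt_not_eq, PI_RGT_0]. Qed.

Lemma REPx r : 0 < r < Rb ->
  dx g a b = / (PI * r) * RInt (fun th => g (a + r * cos th) (b + r * sin th) * cos th) 0 (2*PI).
Proof.
  intros Hr.
  assert (E := REP cos (fun t => - sin t) r).
  apply (rep_fix _ _ (dy g a b) r). lra.
  unfold w, P1, P2 in E. rewrite E; clear E.
  - f_equal. apply is_RInt_uniqR.
    apply is_RInt_extR with (f := fun th => dx g a b * (cos th * cos th) + dy g a b * (sin th * cos th)).
    { intros th. unfold W1. rewrite GX0, GY0. ring. }
    apply is_RInt_plusR; apply is_RInt_scalR. apply is_RInt_cc. apply is_RInt_sc.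
  - intros t. auto_derive; try easy; try ring.
  - intros t. auto_derive; try easy; try ring.
  - rewrite cos_2PI, cos_0; reflexivity.
  - rewrite sin_2PI, sin_0; reflexivity.
  - exact Hr.
Qed.

Lemma REPy r : 0 < r < Rb ->
  dy g a b = / (PI * r) * RInt (fun th => g (a + r * cos th) (b + r * sin th) * sin th) 0 (2*PI).
Proof.
  intros Hr.
  assert (E := REP sin cos r).
  apply (rep_fix' _ _ (dx g a b) r). lra.
  unfold w, P1, P2 in E. rewrite E; clear E.
  - f_equal. apply is_RInt_uniqR.
    apply is_RInt_extR with (f := fun th => dx g a b * (cos th * sin th) + dy g a b * (sin th * sin th)).
    { intros th. unfold W1. rewrite GX0, GY0. ring. }
    apply is_RInt_plusR; apply is_RInt_scalR. apply is_RInt_cs. apply is_RInt_ss.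
  - intros t. auto_derive; try easy; try ring.
  - intros t. auto_derive; try easy; try ring.
  - rewrite sin_2PI, sin_0; reflexivity.
  - rewrite cos_2PI, cos_0; reflexivity.
  - exact Hr.
Qed.

Lemma MVP' r : 0 < r < Rb ->
  RInt (fun th => cos th * dx g (a + r * cos th) (b + r * sin th) + sin th * dy g (a + r * cos th) (b + r * sin th)) 0 (2*PI) = 0.
Proof. intros Hr. apply (MVP r Hr). Qed.
End Harm.

Lemma open_ivl_loc a b s : open_ivl a b s -> locally s (open_ivl a b).
Proof.
  intros H. apply (open_and (fun u : R => Rbar_lt a u) (fun u : R => Rbar_lt u b)).
  apply open_Rbar_gt. apply open_Rbar_lt. exact H.
Qed.

Lemma open2_loc (U : R -> R -> Prop) x y : open2 U -> U x y ->
  exists d : posreal, forall u v, Rabs (u - x) < d -> Rabs (v - y) < d -> U u v.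
Proof.
  intros HU Hxy. specialize (HU (x, y) Hxy).
  apply (proj2 (locally_2d_locally (fun u v => U u v) x y)) in HU. exact HU.
Qed.

Lemma loc_exists (P : R -> Prop) x : locally x P -> exists d : posreal, forall y, Rabs (y - x) < d -> P y.
Proof. intros [d Hd]. exists d. intros y Hy. apply Hd. exact Hy. Qed.

Lemma loc2_of (P Q : R -> Prop) a b : locally a P -> locally b Q -> locally_2d (fun u v => P u /\ Q v) a b.
Proof.
  intros HP HQ. destruct (loc_exists P a HP) as [d1 H1]. destruct (loc_exists Q b HQ) as [d2 H2].
  assert (Hd : 0 < Rmin d1 d2) by (apply Rmin_pos; apply cond_pos).
  exists (mkposreal _ Hd). simpl. intros u v Hu Hv.
  assert (M1 := Rmin_l d1 d2). assert (M2 := Rmin_r d1 d2). split; [apply H1 | apply H2]; lra.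
Qed.

Lemma cos_le1 th : Rabs (cos th) <= 1.
Proof. apply Rabs_le; apply COS_bound. Qed.
Lemma sin_le1 th : Rabs (sin th) <= 1.
Proof. apply Rabs_le; apply SIN_bound. Qed.
Lemma circ_bound (x0 x r c : R) : 0 <= r -> Rabs c <= 1 -> Rabs (x + r * c - x0) <= Rabs (x - x0) + r.
Proof.
  intros Hr Hc. replace (x + r * c - x0) with ((x - x0) + r * c) by ring.
  eapply Rle_trans. apply Rabs_triang. rewrite Rabs_mult, (Rabs_pos_eq r Hr).
  assert (r * Rabs c <= r * 1) by (apply Rmult_le_compat_l; auto). lra.
Qed.

Section Main.
Variables (U : R -> R -> Prop) (aJ bJ : Rbar) (u : R -> R -> R -> R).
Hypothesis HUo : open2 U.
Hypothesis HC1 : C1_on3 u (fun x y s => U x y /\ open_ivl aJ bJ s).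

Lemma C1u x y s : U x y -> open_ivl aJ bJ s ->
    ex_derive (fun x' => u x' y s) x /\
    ex_derive (fun y' => u x y' s) y /\
    ex_derive (fun z' => u x y z') s /\
    continuous (uncurry3 u) (x, y, s) /\
    continuous (uncurry3 (pdx u)) (x, y, s) /\
    continuous (uncurry3 (pdy u)) (x, y, s) /\
    continuous (uncurry3 (pdz u)) (x, y, s).
Proof. intros; apply HC1; auto. Qed.

Lemma diff13 a c b : U a c -> open_ivl aJ bJ b ->
  differentiable_pt_lim (fun a' b' => u a' c b') a b (pdx u a c b) (pdz u a c b).
Proof.
  intros Hac Hb. destruct (open2_loc U a c HUo Hac) as [d Hd].
  assert (L : locally_2d (fun a' b' => U a' c /\ open_ivl aJ bJ b') a b).
  { apply loc2_of. exists d. intros y Hy. apply Hd. exact Hy. rewrite Rminus_eq_0, Rabs_R0; apply cond_pos.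
    apply open_ivl_loc; auto. }
  apply diff_partials.
  - destruct L as [e He]. exists e. intros a' b' Ha Hb'. destruct (He a' b' Ha Hb') as [H1 H2].
    destruct (C1u a' c b' H1 H2) as (e1&e2&e3&_). auto.
  - apply c2d_of. destruct (C1u a c b Hac Hb) as (_&_&_&_&c5&_&_).
    apply (cont_comp3 (pdx u) fst (fun _ => c) snd (a, b)); auto.
    apply cont_fst. apply continuous_const. apply cont_snd.
  - apply c2d_of. destruct (C1u a c b Hac Hb) as (_&_&_&_&_&_&c7).
    apply (cont_comp3 (pdz u) fst (fun _ => c) snd (a, b)); auto.
    apply cont_fst. apply continuous_const. apply cont_snd.
Qed.

Lemma diff23 c a b : U c a -> open_ivl aJ bJ b ->
  differentiable_pt_lim (fun a' b' => u c a' b') a b (pdy u c a b) (pdz u c a b).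
Proof.
  intros Hac Hb. destruct (open2_loc U c a HUo Hac) as [d Hd].
  assert (L : locally_2d (fun a' b' => U c a' /\ open_ivl aJ bJ b') a b).
  { apply loc2_of. exists d. intros y Hy. apply Hd. rewrite Rminus_eq_0, Rabs_R0; apply cond_pos. exact Hy.
    apply open_ivl_loc; auto. }
  apply diff_partials.
  - destruct L as [e He]. exists e. intros a' b' Ha Hb'. destruct (He a' b' Ha Hb') as [H1 H2].
    destruct (C1u c a' b' H1 H2) as (e1&e2&e3&_). auto.
  - apply c2d_of. destruct (C1u c a b Hac Hb) as (_&_&_&_&_&c6&_).
    apply (cont_comp3 (pdy u) (fun _ => c) fst snd (a, b)); auto.
    apply continuous_const. apply cont_fst. apply cont_snd.
  - apply c2d_of. destruct (C1u c a b Hac Hb) as (_&_&_&_&_&_&c7).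
    apply (cont_comp3 (pdz u) (fun _ => c) fst snd (a, b)); auto.
    apply continuous_const. apply cont_fst. apply cont_snd.
Qed.

End Main.

Lemma tri (a b c e1 e2 : R) : Rabs (a - b) < e1 -> Rabs (b - c) < e2 -> Rabs (a - c) < e1 + e2.
Proof.
  intros H1 H2. assert (T := Rabs_triang (a - b) (b - c)).
  replace (a - b + (b - c)) with (a - c) in T by ring. lra.
Qed.

Lemma is_derive_cmul (f : R -> R) c t df : is_derive f t df -> is_derive (fun s => c * f s) t (c * df).
Proof. intros H. apply is_derive_val with (l := 0 * f t + c * df). ring.
  apply (is_derive_mulR (fun _ => c) f); auto. auto_derive; try easy. Qed.

Lemma is_derive_rmul (f : R -> R) c t df : is_derive f t df -> is_derive (fun s => f s * c) t (df * c).
Proof. intros H. apply is_derive_val with (l := df * c + f t * 0). ring.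
  apply (is_derive_mulR f (fun _ => c)); auto. auto_derive; try easy. Qed.

Lemma loc_half x e (P : R -> Prop) : 0 < e -> (forall v, Rabs (v - x) < e -> P v) -> locally x P.
Proof.
  intros He H. exists (mkposreal e He). intros v Hv. apply H. exact Hv.
Qed.

Lemma is_derive_extR (f g : R -> R) t (l : R) : (forall s, f s = g s) -> is_derive f t l -> is_derive g t l.
Proof. intros H. apply is_derive_ext. exact H. Qed.

Theorem lemma3p1
  (U : R -> R -> Prop) (aI bI aJ bJ : Rbar)
  (u : R -> R -> R -> R) (t : R -> R -> R -> R) :
  open2 U ->
  (* u : U x J -> I *)
  (forall x y s, U x y -> open_ivl aJ bJ s -> open_ivl aI bI (u x y s)) ->
  C1_on3 u (fun x y s => U x y /\ open_ivl aJ bJ s) ->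
  (forall s, open_ivl aJ bJ s -> harmonic_on (fun x y => u x y s) U) ->
  (* t : U x I -> J, C^1, with u(x,y;t(x,y;z)) = z *)
  (forall x y z, U x y -> open_ivl aI bI z -> open_ivl aJ bJ (t x y z)) ->
  C1_on3 t (fun x y z => U x y /\ open_ivl aI bI z) ->
  (forall x y z, U x y -> open_ivl aI bI z -> u x y (t x y z) = z) ->
  divergence_free_on
    (fun x y z => 2 * pdx u x y (t x y z))
    (fun x y z => 2 * pdy u x y (t x y z))
    (fun x y z => (pdx u x y (t x y z)) ^ 2 + (pdy u x y (t x y z)) ^ 2)
    (fun x y z => U x y /\ open_ivl aI bI z).
Proof.
  intros HUo HuI HC1 Hharm HtJ HC1t Hid.
  intros x y z [Hxy Hz].
  destruct (open2_loc U x y HUo Hxy) as [d Hd].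
  assert (Hdp := cond_pos d).
  set (r := d / 4).
  assert (Hr : 0 < r) by (unfold r; lra).
  assert (MemU : forall v w, Rabs (v - x) < d/2 -> Rabs (w - y) < d/2 -> U v w).
  { intros v w H1 H2. apply Hd; lra. }
  assert (Mem : forall v w th, Rabs (v - x) < d/2 -> Rabs (w - y) < d/2 -> U (v + r * cos th) (w + r * sin th)).
  { intros v w th H1 H2. apply Hd.
    - assert (B := circ_bound x v r (cos th) (Rlt_le _ _ Hr) (cos_le1 th)). unfold r in *; lra.
    - assert (B := circ_bound y w r (sin th) (Rlt_le _ _ Hr) (sin_le1 th)). unfold r in *; lra. }
  assert (MemT : forall v w, Rabs (v - x) < d/2 -> Rabs (w - y) < d/2 -> open_ivl aJ bJ (t v w z)).
  { intros v w H1 H2. apply HtJ; auto. }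
  assert (MemTz : forall z', open_ivl aI bI z' -> open_ivl aJ bJ (t x y z')).
  { intros z' H. apply HtJ; auto. }
  assert (X0 : Rabs (x - x) < d/2) by (rewrite Rminus_eq_0, Rabs_R0; lra).
  assert (Y0 : Rabs (y - y) < d/2) by (rewrite Rminus_eq_0, Rabs_R0; lra).
  assert (RX : forall x' y' s, Rabs (x' - x) < d/2 -> Rabs (y' - y) < d/2 -> open_ivl aJ bJ s ->
    pdx u x' y' s = / (PI * r) * RInt (fun th => u (x' + r * cos th) (y' + r * sin th) s * cos th) 0 (2*PI)).
  { intros x' y' s H1 H2 Hs.
    apply (REPx U (fun x y => u x y s) x' y' (d/2)).
    - intros xx yy H3 H4. apply Hd.
      + assert (T := tri xx x' x (d/2) (d/2) H3 H1). lra.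
      + assert (T := tri yy y' y (d/2) (d/2) H4 H2). lra.
    - apply Hharm; auto.
    - unfold r; lra. }
  assert (RY : forall x' y' s, Rabs (x' - x) < d/2 -> Rabs (y' - y) < d/2 -> open_ivl aJ bJ s ->
    pdy u x' y' s = / (PI * r) * RInt (fun th => u (x' + r * cos th) (y' + r * sin th) s * sin th) 0 (2*PI)).
  { intros x' y' s H1 H2 Hs.
    apply (REPy U (fun x y => u x y s) x' y' (d/2)).
    - intros xx yy H3 H4. apply Hd.
      + assert (T := tri xx x' x (d/2) (d/2) H3 H1). lra.
      + assert (T := tri yy y' y (d/2) (d/2) H4 H2). lra.
    - apply Hharm; auto.
    - unfold r; lra. }
  assert (C1tx : forall v w, Rabs (v - x) < d/2 -> Rabs (w - y) < d/2 ->
     ex_derive (fun x' => t x' w z) v /\ ex_derive (fun y' => t v y' z) w /\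
     continuous (uncurry3 t) (v, w, z) /\ continuous (uncurry3 (pdx t)) (v, w, z) /\
     continuous (uncurry3 (pdy t)) (v, w, z)).
  { intros v w H1 H2. destruct (HC1t v w z (conj (MemU v w H1 H2) Hz)) as (e1&e2&e3&c1&c2&c3&c4). auto. }
  assert (DP : is_derive (fun x' => 2 * pdx u x' y (t x' y z)) x
     (2 * (/ (PI * r) * RInt (fun th => (pdx u (x + r * cos th) (y + r * sin th) (t x y z) * 1
           + pdz u (x + r * cos th) (y + r * sin th) (t x y z) * pdx t x y z) * cos th) 0 (2*PI)))).
  { apply is_derive_ext_loc with (f := fun x' => 2 * (/ (PI * r) *
        RInt (fun th => u (x' + r * cos th) (y + r * sin th) (t x' y z) * cos th) 0 (2*PI))).
    { apply (loc_half x (d/2)). lra. intros v Hv. rewrite (RX v y); auto. }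
    apply is_derive_cmul, is_derive_cmul.
    apply (PD (fun v th => u (v + r * cos th) (y + r * sin th) (t v y z) * cos th)
              (fun v th => (pdx u (v + r * cos th) (y + r * sin th) (t v y z) * 1
           + pdz u (v + r * cos th) (y + r * sin th) (t v y z) * pdx t v y z) * cos th)).
    - apply (loc_half x (d/2)). lra. intros v Hv th.
      apply is_derive_rmul.
      apply (CH (fun a' b' => u a' (y + r * sin th) b') (fun w => w + r * cos th) (fun w => t w y z) v
               (pdx u (v + r * cos th) (y + r * sin th) (t v y z)) (pdz u (v + r * cos th) (y + r * sin th) (t v y z))
               1 (pdx t v y z)).
      + apply (diff13 U aJ bJ u HUo HC1). apply Mem; auto. apply MemT; auto.
      + auto_derive; try easy; try ring.
      + apply Derive_correct. apply (C1tx v y Hv Y0).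
      + reflexivity.
    - intros th. cbv beta.
      destruct (C1tx x y X0 Y0) as (_&_&ct&ctx&_).
      destruct (C1u U aJ bJ u HC1 (x + r * cos th) (y + r * sin th) (t x y z) (Mem x y th X0 Y0) (MemT x y X0 Y0))
        as (_&_&_&cu&cux&cuy&cuz).
      assert (CT : continuous (fun q : R * R => t (fst q) y z) (x, th)).
      { apply (cont_comp3 t fst (fun _ => y) (fun _ => z) (x, th)); auto.
        apply cont_fst. apply continuous_const. apply continuous_const. }
      apply cont_multR; [| contR].
      apply cont_plusR; apply cont_multR.
      + apply (cont_comp3 (pdx u) (fun q : R * R => fst q + r * cos (snd q)) (fun q : R * R => y + r * sin (snd q))
                 (fun q : R * R => t (fst q) y z) (x, th)); auto; contR.
      + apply continuous_const.
      + apply (cont_comp3 (pdz u) (fun q : R * R => fst q + r * cos (snd q)) (fun q : R * R => y + r * sin (snd q))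
                 (fun q : R * R => t (fst q) y z) (x, th)); auto; contR.
      + apply (cont_comp3 (pdx t) fst (fun _ => y) (fun _ => z) (x, th)); auto.
        apply cont_fst. apply continuous_const. apply continuous_const.
    - apply (loc_half x (d/2)). lra. intros v Hv th. cbv beta.
      destruct (C1u U aJ bJ u HC1 (v + r * cos th) (y + r * sin th) (t v y z) (Mem v y th Hv Y0) (MemT v y Hv Y0))
        as (_&_&_&cu&_).
      apply cont_multR; [| contR].
      apply (cont_comp3 u (fun th => v + r * cos th) (fun th => y + r * sin th) (fun _ => t v y z) th); auto; contR. }
  assert (DQ : is_derive (fun y' => 2 * pdy u x y' (t x y' z)) y
     (2 * (/ (PI * r) * RInt (fun th => (pdy u (x + r * cos th) (y + r * sin th) (t x y z) * 1
           + pdz u (x + r * cos th) (y + r * sin th) (t x y z) * pdy t x y z) * sin th) 0 (2*PI)))).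
  { apply is_derive_ext_loc with (f := fun y' => 2 * (/ (PI * r) *
        RInt (fun th => u (x + r * cos th) (y' + r * sin th) (t x y' z) * sin th) 0 (2*PI))).
    { apply (loc_half y (d/2)). lra. intros v Hv. rewrite (RY x v); auto. }
    apply is_derive_cmul, is_derive_cmul.
    apply (PD (fun v th => u (x + r * cos th) (v + r * sin th) (t x v z) * sin th)
              (fun v th => (pdy u (x + r * cos th) (v + r * sin th) (t x v z) * 1
           + pdz u (x + r * cos th) (v + r * sin th) (t x v z) * pdy t x v z) * sin th)).
    - apply (loc_half y (d/2)). lra. intros v Hv th.
      apply is_derive_rmul.
      apply (CH (fun a' b' => u (x + r * cos th) a' b') (fun w => w + r * sin th) (fun w => t x w z) v
               (pdy u (x + r * cos th) (v + r * sin th) (t x v z)) (pdz u (x + r * cos th) (v + r * sin th) (t x v z))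
               1 (pdy t x v z)).
      + apply (diff23 U aJ bJ u HUo HC1). apply Mem; auto. apply MemT; auto.
      + auto_derive; try easy; try ring.
      + apply Derive_correct. apply (C1tx x v X0 Hv).
      + reflexivity.
    - intros th. cbv beta.
      destruct (C1tx x y X0 Y0) as (_&_&ct&ctx&cty).
      destruct (C1u U aJ bJ u HC1 (x + r * cos th) (y + r * sin th) (t x y z) (Mem x y th X0 Y0) (MemT x y X0 Y0))
        as (_&_&_&cu&cux&cuy&cuz).
      assert (CT : continuous (fun q : R * R => t x (fst q) z) (y, th)).
      { apply (cont_comp3 t (fun _ => x) fst (fun _ => z) (y, th)); auto.
        apply continuous_const. apply cont_fst. apply continuous_const. }
      apply cont_multR; [| contR].
      apply cont_plusR; apply cont_multR.
      + apply (cont_comp3 (pdy u) (fun q : R * R => x + r * cos (snd q)) (fun q : R * R => fst q + r * sin (snd q))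
                 (fun q : R * R => t x (fst q) z) (y, th)); auto; contR.
      + apply continuous_const.
      + apply (cont_comp3 (pdz u) (fun q : R * R => x + r * cos (snd q)) (fun q : R * R => fst q + r * sin (snd q))
                 (fun q : R * R => t x (fst q) z) (y, th)); auto; contR.
      + apply (cont_comp3 (pdy t) (fun _ => x) fst (fun _ => z) (y, th)); auto.
        apply continuous_const. apply cont_fst. apply continuous_const.
    - apply (loc_half y (d/2)). lra. intros v Hv th. cbv beta.
      destruct (C1u U aJ bJ u HC1 (x + r * cos th) (v + r * sin th) (t x v z) (Mem x v th X0 Hv) (MemT x v X0 Hv))
        as (_&_&_&cu&_).
      apply cont_multR; [| contR].
      apply (cont_comp3 u (fun th => x + r * cos th) (fun th => v + r * sin th) (fun _ => t x v z) th); auto; contR. }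
  assert (DA : is_derive (fun z' => pdx u x y (t x y z')) z
     (/ (PI * r) * RInt (fun th => pdz u (x + r * cos th) (y + r * sin th) (t x y z) * pdz t x y z * cos th) 0 (2*PI))).
  { apply is_derive_ext_loc with (f := fun z' => / (PI * r) *
        RInt (fun th => u (x + r * cos th) (y + r * sin th) (t x y z') * cos th) 0 (2*PI)).
    { eapply filter_imp; [| apply (open_ivl_loc aI bI z Hz)]. intros w Hw. cbv beta. rewrite (RX x y); auto. }
    apply is_derive_cmul.
    apply (PD (fun w th => u (x + r * cos th) (y + r * sin th) (t x y w) * cos th)
              (fun w th => pdz u (x + r * cos th) (y + r * sin th) (t x y w) * pdz t x y w * cos th)).
    - eapply filter_imp; [| apply (open_ivl_loc aI bI z Hz)]. intros w Hw th.
      apply is_derive_rmul.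
      apply is_derive_val with (l := scal (pdz t x y w) (pdz u (x + r * cos th) (y + r * sin th) (t x y w))).
      { unfold scal; simpl; unfold mult; simpl; ring. }
      apply (is_derive_comp (fun s => u (x + r * cos th) (y + r * sin th) s) (fun w => t x y w)).
      + apply Derive_correct.
        destruct (C1u U aJ bJ u HC1 (x + r * cos th) (y + r * sin th) (t x y w) (Mem x y th X0 Y0) (MemTz w Hw))
          as (_&_&e3&_). exact e3.
      + apply Derive_correct. destruct (HC1t x y w (conj Hxy Hw)) as (_&_&e3&_). exact e3.
    - intros th. cbv beta.
      destruct (HC1t x y z (conj Hxy Hz)) as (_&_&_&ct&_&_&ctz).
      destruct (C1u U aJ bJ u HC1 (x + r * cos th) (y + r * sin th) (t x y z) (Mem x y th X0 Y0) (MemTz z Hz))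
        as (_&_&_&cu&cux&cuy&cuz).
      assert (CT : continuous (fun q : R * R => t x y (fst q)) (z, th)).
      { apply (cont_comp3 t (fun _ => x) (fun _ => y) fst (z, th)); auto.
        apply continuous_const. apply continuous_const. apply cont_fst. }
      apply cont_multR; [| contR].
      apply cont_multR.
      + apply (cont_comp3 (pdz u) (fun q : R * R => x + r * cos (snd q)) (fun q : R * R => y + r * sin (snd q))
                 (fun q : R * R => t x y (fst q)) (z, th)); auto; contR.
      + apply (cont_comp3 (pdz t) (fun _ => x) (fun _ => y) fst (z, th)); auto.
        apply continuous_const. apply continuous_const. apply cont_fst.
    - eapply filter_imp; [| apply (open_ivl_loc aI bI z Hz)]. intros w Hw th. cbv beta.
      destruct (C1u U aJ bJ u HC1 (x + r * cos th) (y + r * sin th) (t x y w) (Mem x y th X0 Y0) (MemTz w Hw))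
        as (_&_&_&cu&_).
      apply cont_multR; [| contR].
      apply (cont_comp3 u (fun th => x + r * cos th) (fun th => y + r * sin th) (fun _ => t x y w) th); auto; contR. }
  assert (DB : is_derive (fun z' => pdy u x y (t x y z')) z
     (/ (PI * r) * RInt (fun th => pdz u (x + r * cos th) (y + r * sin th) (t x y z) * pdz t x y z * sin th) 0 (2*PI))).
  { apply is_derive_ext_loc with (f := fun z' => / (PI * r) *
        RInt (fun th => u (x + r * cos th) (y + r * sin th) (t x y z') * sin th) 0 (2*PI)).
    { eapply filter_imp; [| apply (open_ivl_loc aI bI z Hz)]. intros w Hw. cbv beta. rewrite (RY x y); auto. }
    apply is_derive_cmul.
    apply (PD (fun w th => u (x + r * cos th) (y + r * sin th) (t x y w) * sin th)
              (fun w th => pdz u (x + r * cos th) (y + r * sin th) (t x y w) * pdz t x y w * sin th)).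
    - eapply filter_imp; [| apply (open_ivl_loc aI bI z Hz)]. intros w Hw th.
      apply is_derive_rmul.
      apply is_derive_val with (l := scal (pdz t x y w) (pdz u (x + r * cos th) (y + r * sin th) (t x y w))).
      { unfold scal; simpl; unfold mult; simpl; ring. }
      apply (is_derive_comp (fun s => u (x + r * cos th) (y + r * sin th) s) (fun w => t x y w)).
      + apply Derive_correct.
        destruct (C1u U aJ bJ u HC1 (x + r * cos th) (y + r * sin th) (t x y w) (Mem x y th X0 Y0) (MemTz w Hw))
          as (_&_&e3&_). exact e3.
      + apply Derive_correct. destruct (HC1t x y w (conj Hxy Hw)) as (_&_&e3&_). exact e3.
    - intros th. cbv beta.
      destruct (HC1t x y z (conj Hxy Hz)) as (_&_&_&ct&_&_&ctz).
      destruct (C1u U aJ bJ u HC1 (x + r * cos th) (y + r * sin th) (t x y z) (Mem x y th X0 Y0) (MemTz z Hz))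
        as (_&_&_&cu&cux&cuy&cuz).
      assert (CT : continuous (fun q : R * R => t x y (fst q)) (z, th)).
      { apply (cont_comp3 t (fun _ => x) (fun _ => y) fst (z, th)); auto.
        apply continuous_const. apply continuous_const. apply cont_fst. }
      apply cont_multR; [| contR].
      apply cont_multR.
      + apply (cont_comp3 (pdz u) (fun q : R * R => x + r * cos (snd q)) (fun q : R * R => y + r * sin (snd q))
                 (fun q : R * R => t x y (fst q)) (z, th)); auto; contR.
      + apply (cont_comp3 (pdz t) (fun _ => x) (fun _ => y) fst (z, th)); auto.
        apply continuous_const. apply continuous_const. apply cont_fst.
    - eapply filter_imp; [| apply (open_ivl_loc aI bI z Hz)]. intros w Hw th. cbv beta.
      destruct (C1u U aJ bJ u HC1 (x + r * cos th) (y + r * sin th) (t x y w) (Mem x y th X0 Y0) (MemTz w Hw))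
        as (_&_&_&cu&_).
      apply cont_multR; [| contR].
      apply (cont_comp3 u (fun th => x + r * cos th) (fun th => y + r * sin th) (fun _ => t x y w) th); auto; contR. }
  set (s0 := t x y z) in *.
  assert (Hs0 : open_ivl aJ bJ s0) by (apply MemT; auto).
  set (VA := / (PI * r) * RInt (fun th => pdz u (x + r * cos th) (y + r * sin th) s0 * pdz t x y z * cos th) 0 (2*PI)) in DA.
  set (VB := / (PI * r) * RInt (fun th => pdz u (x + r * cos th) (y + r * sin th) s0 * pdz t x y z * sin th) 0 (2*PI)) in DB.
  assert (DS : is_derive (fun z' => pdx u x y (t x y z') ^ 2 + pdy u x y (t x y z') ^ 2) z
                 (2 * pdx u x y s0 * VA + 2 * pdy u x y s0 * VB)).
  { apply is_derive_extR with (f := fun z' => pdx u x y (t x y z') * pdx u x y (t x y z') + pdy u x y (t x y z') * pdy u x y (t x y z')).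
    { intros w. ring. }
    apply is_derive_val with (l := (VA * pdx u x y s0 + pdx u x y s0 * VA) + (VB * pdy u x y s0 + pdy u x y s0 * VB)).
    { ring. }
    apply is_derive_plusR.
    - apply (is_derive_mulR (fun z' => pdx u x y (t x y z')) (fun z' => pdx u x y (t x y z'))); exact DA.
    - apply (is_derive_mulR (fun z' => pdy u x y (t x y z')) (fun z' => pdy u x y (t x y z'))); exact DB. }
  assert (IDx : pdx u x y s0 * 1 + pdz u x y s0 * pdx t x y z = 0).
  { assert (H1 : is_derive (fun v => u v y (t v y z)) x (pdx u x y s0 * 1 + pdz u x y s0 * pdx t x y z)).
    { apply (CH (fun a' b' => u a' y b') (fun w => w) (fun w => t w y z) x (pdx u x y s0) (pdz u x y s0) 1 (pdx t x y z)).
      - apply (diff13 U aJ bJ u HUo HC1); auto.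
      - auto_derive; try easy.
      - apply Derive_correct. apply (C1tx x y X0 Y0).
      - reflexivity. }
    assert (H2 : is_derive (fun v => u v y (t v y z)) x 0).
    { apply is_derive_ext_loc with (f := fun _ => z).
      - apply (loc_half x (d/2)). lra. intros v Hv. symmetry. apply Hid; auto.
      - auto_derive; try easy. }
    apply (is_derive_unique _ _ _) in H1. apply (is_derive_unique _ _ _) in H2.
    rewrite <- H1. exact H2. }
  assert (IDy : pdy u x y s0 * 1 + pdz u x y s0 * pdy t x y z = 0).
  { assert (H1 : is_derive (fun v => u x v (t x v z)) y (pdy u x y s0 * 1 + pdz u x y s0 * pdy t x y z)).
    { apply (CH (fun a' b' => u x a' b') (fun w => w) (fun w => t x w z) y (pdy u x y s0) (pdz u x y s0) 1 (pdy t x y z)).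
      - apply (diff23 U aJ bJ u HUo HC1); auto.
      - auto_derive; try easy.
      - apply Derive_correct. apply (C1tx x y X0 Y0).
      - reflexivity. }
    assert (H2 : is_derive (fun v => u x v (t x v z)) y 0).
    { apply is_derive_ext_loc with (f := fun _ => z).
      - apply (loc_half y (d/2)). lra. intros v Hv. symmetry. apply Hid; auto.
      - auto_derive; try easy. }
    apply (is_derive_unique _ _ _) in H1. apply (is_derive_unique _ _ _) in H2.
    rewrite <- H1. exact H2. }
  assert (IDz : pdz u x y s0 * pdz t x y z = 1).
  { assert (H1 : is_derive (fun w => u x y (t x y w)) z (scal (pdz t x y z) (pdz u x y s0))).
    { apply (is_derive_comp (fun s => u x y s) (fun w => t x y w)).
      - apply Derive_correct. destruct (C1u U aJ bJ u HC1 x y s0 Hxy Hs0) as (_&_&e3&_). exact e3.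
      - apply Derive_correct. destruct (HC1t x y z (conj Hxy Hz)) as (_&_&e3&_). exact e3. }
    assert (H2 : is_derive (fun w => u x y (t x y w)) z 1).
    { apply is_derive_ext_loc with (f := fun w => w).
      - eapply filter_imp; [| apply (open_ivl_loc aI bI z Hz)]. intros w Hw. symmetry. apply Hid; auto.
      - auto_derive; try easy. }
    apply (is_derive_unique _ _ _) in H1. apply (is_derive_unique _ _ _) in H2.
    rewrite H1 in H2. unfold scal in H2; simpl in H2; unfold mult in H2; simpl in H2. lra. }
  split; [eexists; exact DP |]. split; [eexists; exact DQ |]. split; [eexists; exact DS |].
  change (Derive (fun x' => 2 * pdx u x' y (t x' y z)) x + Derive (fun y' => 2 * pdy u x y' (t x y' z)) y
     + Derive (fun z' => pdx u x y (t x y z') ^ 2 + pdy u x y (t x y z') ^ 2) z = 0).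
  rewrite (is_derive_unique (fun x' : R => 2 * pdx u x' y (t x' y z)) x _ DP).
  rewrite (is_derive_unique (fun y' : R => 2 * pdy u x y' (t x y' z)) y _ DQ).
  rewrite (is_derive_unique (fun z' : R => pdx u x y (t x y z') ^ 2 + pdy u x y (t x y z') ^ 2) z _ DS).
  unfold VA, VB.
  assert (CL : forall th,
     continuous (fun th => pdx u (x + r * cos th) (y + r * sin th) s0) th /\
     continuous (fun th => pdy u (x + r * cos th) (y + r * sin th) s0) th /\
     continuous (fun th => pdz u (x + r * cos th) (y + r * sin th) s0) th).
  { intros th. destruct (C1u U aJ bJ u HC1 (x + r * cos th) (y + r * sin th) s0 (Mem x y th X0 Y0) Hs0)
      as (_&_&_&_&cux&cuy&cuz).
    split; [|split].
    - apply (cont_comp3 (pdx u) (fun th => x + r * cos th) (fun th => y + r * sin th) (fun _ => s0) th); auto; contR.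
    - apply (cont_comp3 (pdy u) (fun th => x + r * cos th) (fun th => y + r * sin th) (fun _ => s0) th); auto; contR.
    - apply (cont_comp3 (pdz u) (fun th => x + r * cos th) (fun th => y + r * sin th) (fun _ => s0) th); auto; contR. }
  assert (I1 := RInt_of_cont (fun th => (pdx u (x + r * cos th) (y + r * sin th) s0 * 1
           + pdz u (x + r * cos th) (y + r * sin th) s0 * pdx t x y z) * cos th) 0 (2*PI)
           ltac:(intros th; contR; first [exact (proj1 (CL _)) | exact (proj1 (proj2 (CL _))) | exact (proj2 (proj2 (CL _)))])).
  assert (I2 := RInt_of_cont (fun th => (pdy u (x + r * cos th) (y + r * sin th) s0 * 1
           + pdz u (x + r * cos th) (y + r * sin th) s0 * pdy t x y z) * sin th) 0 (2*PI)
           ltac:(intros th; contR; first [exact (proj1 (CL _)) | exact (proj1 (proj2 (CL _))) | exact (proj2 (proj2 (CL _)))])).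
  assert (I3 := RInt_of_cont (fun th => pdz u (x + r * cos th) (y + r * sin th) s0 * pdz t x y z * cos th) 0 (2*PI)
           ltac:(intros th; contR; first [exact (proj1 (CL _)) | exact (proj1 (proj2 (CL _))) | exact (proj2 (proj2 (CL _)))])).
  assert (I4 := RInt_of_cont (fun th => pdz u (x + r * cos th) (y + r * sin th) s0 * pdz t x y z * sin th) 0 (2*PI)
           ltac:(intros th; contR; first [exact (proj1 (CL _)) | exact (proj1 (proj2 (CL _))) | exact (proj2 (proj2 (CL _)))])).
  assert (M := MVP' U (fun x y => u x y s0) x y d Hd (Hharm s0 Hs0) r ltac:(unfold r; lra)).
  set (A := pdx u x y s0) in *. set (B := pdy u x y s0) in *.
  set (tx := pdx t x y z) in *. set (ty := pdy t x y z) in *. set (tz := pdz t x y z) in *.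
  assert (Etx : tx + A * tz = 0).
  { transitivity (tz * (A * 1 + pdz u x y s0 * tx) + tx * (1 - pdz u x y s0 * tz)); [ring|].
    rewrite IDx, IDz. ring. }
  assert (Ety : ty + B * tz = 0).
  { transitivity (tz * (B * 1 + pdz u x y s0 * ty) + ty * (1 - pdz u x y s0 * tz)); [ring|].
    rewrite IDy, IDz. ring. }
  assert (C := is_RInt_plusR _ _ _ _ _ _ (is_RInt_plusR _ _ _ _ _ _ I1 I2)
                 (is_RInt_plusR _ _ _ _ _ _ (is_RInt_scalR _ _ _ A _ I3) (is_RInt_scalR _ _ _ B _ I4))).
  apply is_RInt_extR with (g := fun th => cos th * pdx u (x + r * cos th) (y + r * sin th) s0
                                       + sin th * pdy u (x + r * cos th) (y + r * sin th) s0) in C.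
  2:{ intros th.
      transitivity (cos th * pdx u (x + r * cos th) (y + r * sin th) s0
                  + sin th * pdy u (x + r * cos th) (y + r * sin th) s0
                  + pdz u (x + r * cos th) (y + r * sin th) s0 * (cos th * (tx + A * tz) + sin th * (ty + B * tz))).
      - ring.
      - rewrite Etx, Ety. ring. }
  assert (E := eq_trans (eq_sym (is_RInt_uniqR _ _ _ _ C)) M).
  simpl in E.
  match type of E with ?L = 0 => idtac end.
  transitivity (2 * / (PI * r) *
     (RInt (fun th => (pdx u (x + r * cos th) (y + r * sin th) s0 * 1
           + pdz u (x + r * cos th) (y + r * sin th) s0 * tx) * cos th) 0 (2*PI)
      + RInt (fun th => (pdy u (x + r * cos th) (y + r * sin th) s0 * 1
           + pdz u (x + r * cos th) (y + r * sin th) s0 * ty) * sin th) 0 (2*PI)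
      + (A * RInt (fun th => pdz u (x + r * cos th) (y + r * sin th) s0 * tz * cos th) 0 (2*PI)
         + B * RInt (fun th => pdz u (x + r * cos th) (y + r * sin th) s0 * tz * sin th) 0 (2*PI)))).
  - ring.
  - rewrite E. ring.
Qed.
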